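(* Let $\mathcal{A}=(Q,A,\delta,q_0,F)$ be a semi-flower automaton and let $b\in A$. If the cycle formed by the $b$-edges of $\mathcal{A}$ has length $1$, then $\mathcal{A}$ is synchronizing.
   Context: An automaton over a finite alphabet $A$ is a quintuple $\mathcal{A}=(Q,A,\delta,q_0,F)$ with $Q$ a non-empty finite set of states, initial state $q_0\in Q$, set of final states $F\subseteq Q$, and total transition function $\delta:Q\times A\to Q$, extended to words in the usual way. Its digraph has vertex set $Q$ and, for each $p\in Q$, $a\in A$, an edge labeled $a$ (an $a$-edge) from $p$ to $\delta(p,a)$. A path is an alternating sequence of distinct vertices and edges, each edge going from the preceding vertex to the next; a cycle is a path with at least one edge whose initial and terminal vertices coincide. A state $q$ is accessible if there is a path from $q_0$ to $q$, and co-accessible if there is a path from $q$ to a final state. $\mathcal{A}$ is a semi-flower automaton if $F=\{q_0\}$, every state is accessible and co-accessible, and every cycle passes through $q_0$. In a semi-flower automaton, the sub-digraph formed by the $b$-edges (for a fixed letter $b$) contains exactly one cycle, called the $b$-cycle. $\mathcal{A}$ is synchronizing if there is a word $w\in A^*$ such that $\{\delta(q,w): q\in Q\}$ is a singleton. *)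

(* Defs.v *)
From mathcomp Require Import all_boot.
Set Implicit Arguments. Unset Strict Implicit. Unset Printing Implicit Defensive.

Section Automata.
Variables (Q A : finType) (delta : Q -> A -> Q).

Definition delta_star (q : Q) (w : seq A) : Q := foldl delta q w.

(* A walk from p to q in the digraph: a sequence of edges, each edge given
   by its source state and label (r, a), representing r --a--> delta r a. *)
Fixpoint walk (p : Q) (s : seq (Q * A)) (q : Q) : bool :=
  match s with
  | [::] => p == q
  | (r, a) :: s' => (r == p) && walk (delta r a) s' q
  end.

Definition is_path (p : Q) (s : seq (Q * A)) (q : Q) : bool :=
  walk p s q && uniq (rcons (map fst s) q).

Definition is_cycle (s : seq (Q * A)) : bool :=
  match s with
  | [::] => false
  | (p, _) :: _ => walk p s p && uniq (map fst s)
  end.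

Definition accessible (q0 q : Q) : Prop := exists s, is_path q0 s q.
Definition coaccessible (F : {set Q}) (q : Q) : Prop :=
  exists s f, f \in F /\ is_path q s f.

Definition semi_flower (q0 : Q) (F : {set Q}) : Prop :=
  [/\ F = [set q0],
      forall q, accessible q0 q,
      forall q, coaccessible F q &
      forall s, is_cycle s -> q0 \in map fst s].

Definition b_cycle (b : A) (s : seq (Q * A)) : bool :=
  is_cycle s && all (fun e => e.2 == b) s.

Definition synchronizing : Prop :=
  exists w : seq A, exists q : Q, forall p : Q, delta_star p w = q.

End Automata.

(* Main.v *)
Require Import Defs.
From mathcomp Require Import all_boot.

Section H.
Variables (Q A : finType) (delta : Q -> A -> Q) (b : A).
Let f := fun q => delta q b.
Let pr := fun q : Q => (q, b).

Lemma walk_map (l : seq Q) x z y :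
  walk delta z (map pr (x :: l)) y = (x == z) && path (frel f) x (rcons l y).
Proof.
elim: l x z => [|a l IH] x z /=.
  by rewrite andbT.
have := IH a (delta x b); rewrite /= => ->; by rewrite (eq_sym a).
Qed.

Lemma cycle_map' (l : seq Q) x :
  is_cycle delta (map pr (x :: l)) = fcycle f (x :: l) && uniq (x :: l).
Proof.
have E := walk_map l x x x; rewrite eqxx /= in E.
rewrite /is_cycle /= E; congr (_ && _); by rewrite -map_comp map_id.
Qed.

Lemma delta_nseq n p : delta_star delta p (nseq n b) = iter n f p.
Proof.
rewrite /delta_star; elim: n p => [|n IH] p //=.
by rewrite IH -iterSr.
Qed.
End H.

Theorem mainTheorem2 (Q A : finType) (delta : Q -> A -> Q) (q0 : Q)
  (F : {set Q}) (b : A) :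
  semi_flower delta q0 F ->
  (exists s, b_cycle delta b s /\ size s = 1) ->
  synchronizing delta.
Proof.
case=> _ _ _ Hcyc [s [Hb Hs]].
set f := fun q => delta q b.
have fq0 : f q0 = q0.
  case: s Hb Hs Hcyc => [|[p a] [|]] //= Hb _ Hcyc.
  move: Hb; rewrite /b_cycle /= !andbT => /andP [/andP [_ /eqP Hp] /eqP Ha].
  have := Hcyc [:: (p, a)]; rewrite /is_cycle /= eqxx Hp eqxx /= => /(_ isT).
  by rewrite inE => /eqP ->; rewrite /f -Ha.
have itq0 n : iter n f q0 = q0 by elim: n => //= n ->.
have key x : iter (order f x) f x = q0.
  set m := order f x.
  have : iter m f x \in orbit f x by have := looping_order f x; rewrite /looping.
  rewrite -fconnect_orbit => /iter_findex.
  have : findex f x (iter m f x) < m.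
    by apply: findex_max; apply: fconnect_iter.
  set i := findex _ _ _ => lti Ei.
  set w := iter m f x.
  have Ew : iter (m - i) f w = w.
    by rewrite /w -{1}Ei -iterD subnK // ltnW.
  have cw : fcycle f (orbit f w).
    rewrite -fconnect_f.
    rewrite -{2}Ew.
    have -> : m - i = (m - i).-1.+1 by rewrite prednK // subn_gt0.
    by rewrite iterSr; apply: fconnect_iter.
  have : q0 \in orbit f w.
    have := Hcyc (map (fun q => (q, b)) (orbit f w)).
    rewrite -map_comp map_id_in //; apply.
    move: cw; rewrite /orbit -orderSpred trajectS.
    move=> cw'; rewrite (@cycle_map' _ _ delta b) cw' /=.
    by have := orbit_uniq f w; rewrite /orbit -orderSpred trajectS.
  move=> q0w.
  have : w \in orbit f q0.
    by rewrite (in_orbit_cycle cw q0w (in_orbit f w)) in_orbit.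
  rewrite -fconnect_orbit => /iter_findex.
  by rewrite itq0.
exists (nseq #|Q| b), q0 => p.
rewrite delta_nseq.
have le : order f p <= #|Q| by apply: max_card.
by rewrite -(subnK le) iterD key itq0.
Qed.
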